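(* For every $n\ge 0$, a permutation $\pi$ of $\{1,\ldots,n\}$ can be produced as the output of a loosely locked jump queue with input $1,2,\ldots,n$ if and only if $\pi$ avoids the pattern $4231$.
   Context: A permutation $\pi=\pi_1\cdots\pi_n$ contains a pattern $\alpha=\alpha_1\cdots\alpha_k$ (a permutation of $\{1,\ldots,k\}$) if there are indices $i_1<\cdots<i_k$ with $\pi_{i_r}<\pi_{i_s}$ iff $\alpha_r<\alpha_s$; otherwise $\pi$ avoids $\alpha$. Jump queues. The input is $1,2,\ldots,n$, and at each step one may either append the next input element to the rear of the queue, or remove (output) some element of the queue; the sequence of outputs forms a permutation of $1,\ldots,n$ once all elements have been output. The front element of the queue may always be output. Outputting an element other than the front element is called a jump, and an element may jump only if it is not locked. When an element $x$ jumps, every element currently in the queue behind $x$ (closer to the rear) becomes locked; this lock is released at the moment when all elements that were in front of $x$ at the time of the jump have been output. An element is locked as long as at least one lock applying to it is in force. (In particular jumping the rear element locks nothing.) - In a loosely locked jump queue, newly appended elements are initially unlocked. *)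

(* Defs.v *)
From mathcomp Require Import all_boot.
Set Implicit Arguments. Unset Strict Implicit. Unset Printing Implicit Defensive.

Definition order_iso (s alpha : seq nat) : bool :=
  (size s == size alpha) &&
  [forall r : 'I_(size alpha), forall t : 'I_(size alpha),
     (nth 0 s r < nth 0 s t) == (nth 0 alpha r < nth 0 alpha t)].

Definition contains (pi alpha : seq nat) : Prop :=
  exists s : seq nat, subseq s pi /\ order_iso s alpha.

Definition avoids (pi alpha : seq nat) : Prop := ~ contains pi alpha.

(* State: number of input elements already appended (next input is i.+1),
   queue contents (front first), list of locks, output so far.
   A lock is a pair (F, L): F = elements that were in front of the jumping
   element at jump time, L = elements that were behind it (and got locked). Newly appended elements are in no L: loose locking. *)
Record jq_state := JQ {
  jq_in : nat;
  jq_queue : seq nat;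
  jq_locks : seq (seq nat * seq nat);
  jq_out : seq nat }.

Definition lock_active (q : seq nat) (l : seq nat * seq nat) : bool :=
  has (fun y => y \in q) l.1.

Definition is_locked (q : seq nat) (locks : seq (seq nat * seq nat)) (x : nat) : bool :=
  has (fun l => lock_active q l && (x \in l.2)) locks.

Inductive jq_step (n : nat) : jq_state -> jq_state -> Prop :=
| jq_push i q L o :
    i < n -> jq_step n (JQ i q L o) (JQ i.+1 (rcons q i.+1) L o)
| jq_pop_front i x q L o :
    jq_step n (JQ i (x :: q) L o) (JQ i q L (rcons o x))
| jq_jump i a x b L o :
    a != [::] -> ~~ is_locked (a ++ x :: b) L x ->
    jq_step n (JQ i (a ++ x :: b) L o) (JQ i (a ++ b) ((a, b) :: L) (rcons o x)).

Inductive jq_reach (n : nat) : jq_state -> jq_state -> Prop :=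
| jq_refl s : jq_reach n s s
| jq_trans s1 s2 s3 : jq_step n s1 s2 -> jq_reach n s2 s3 -> jq_reach n s1 s3.

Definition jq_producible (n : nat) (pi : seq nat) : Prop :=
  exists L, jq_reach n (JQ 0 [::] [::] [::]) (JQ n [::] L pi).

(* Main.v *)
Require Import Defs.
From mathcomp Require Import all_boot zify.
Set Implicit Arguments. Unset Strict Implicit. Unset Printing Implicit Defensive.

Lemma reach_trans n s1 s2 s3 : jq_reach n s1 s2 -> jq_reach n s2 s3 -> jq_reach n s1 s3.
Proof. elim=> [//|a b c Hab _ IH] H; exact: jq_trans Hab (IH H). Qed.

Lemma reach1 n s1 s2 : jq_step n s1 s2 -> jq_reach n s1 s2.
Proof. move=> H; apply: jq_trans H (jq_refl _ _). Qed.

Lemma idx_old (o : seq nat) z v : v \in o -> index v (rcons o z) = index v o.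
Proof. by move=> H; rewrite -cats1 index_cat H. Qed.

Lemma idx_new (o : seq nat) z : z \notin o -> index z (rcons o z) = size o.
Proof. by move=> H; rewrite -cats1 index_cat (negbTE H) /= eqxx addn0. Qed.

Lemma idx_none (o : seq nat) z v : v \notin o -> v != z -> index v (rcons o z) = (size o).+1.
Proof. by move=> H H'; rewrite -cats1 index_cat (negbTE H) /= eq_sym (negbTE H') addn1. Qed.

Lemma idx_lt (o : seq nat) v : v \in o -> index v o < size o.
Proof. by rewrite index_mem. Qed.

Definition Jinv (o : seq nat) (L : seq (seq nat * seq nat)) : Prop :=
 forall w x y t, w \in o -> x \in o -> index w o < index x o -> 0 < y -> y < x -> x < t -> t < w ->
   index x o < index y o -> index x o < index t o ->
   (t \in o -> index y o < index t o) /\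
   (y \notin o -> has (fun l => (y \in l.1) && (t \in l.2)) L).

Lemma J_out o L L' z :
  Jinv o L -> z \notin o ->
  (forall w y t, w \in o -> 0 < y -> y < z -> z < t -> t < w -> y \notin o -> t \notin o ->
      has (fun l => (y \in l.1) && (t \in l.2)) L') ->
  (forall P, has P L -> has P L') ->
  (forall y, y \notin o -> 0 < y -> y < z -> has (fun l => (y \in l.1) && (z \in l.2)) L -> False) ->
  Jinv (rcons o z) L'.
Proof.
move=> J zo Hnew Hold Hnl w x y t.
rewrite !mem_rcons !in_cons => Hw Hx Hwx Hy0 Hyx Hxt Htw Hxy Hxt'.
have Hs := idx_new zo.
case xo: (x \in o).
- rewrite (idx_old _ xo) in Hwx Hxy Hxt'.
  have ltx := idx_lt xo.
  have wo : w \in o.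
    case wo: (w \in o) => //; move: Hw; rewrite wo orbF => /eqP wz.
    by move: Hwx; rewrite wz Hs; lia.
  rewrite (idx_old _ wo) in Hwx.
  have Hy1 : index x o < index y o.
    case yo: (y \in o); first by rewrite -(idx_old z yo).
    by rewrite [index y o]memNindex ?yo.
  have Ht1 : index x o < index t o.
    case tin: (t \in o); first by rewrite -(idx_old z tin).
    by rewrite [index t o]memNindex ?tin.
  have [A0 B0] := J w x y t wo xo Hwx Hy0 Hyx Hxt Htw Hy1 Ht1.
  split.
  + case tin: (t \in o) => /=.
    * move=> _; have := A0 tin; have := idx_lt tin => h1 h2.
      have yo : y \in o by rewrite -index_mem; exact: ltn_trans h2 h1.
      by rewrite (idx_old _ yo) (idx_old _ tin).
    * rewrite orbF => /eqP tz; subst t.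
      case yo: (y \in o); first by rewrite (idx_old _ yo) Hs; apply: idx_lt.
      exfalso; apply: (Hnl y); rewrite ?yo //; try lia.
      by apply: B0; rewrite yo.
  + move=> ny; apply: Hold; apply: B0; apply: contra ny => yo; by rewrite yo orbT.
- move: Hx; rewrite xo orbF => /eqP xz; subst x.
  rewrite Hs in Hwx Hxy Hxt'.
  have wo : w \in o.
    case wo: (w \in o) => //; move: Hwx.
    case: (w =P z) => [wz|/eqP wz]; first by rewrite wz Hs; lia.
    by rewrite idx_none ?wo //; lia.
  have yo : y \notin o by apply/negP => yi; move: Hxy; rewrite idx_old // ; have := idx_lt yi; lia.
  have tin : t \notin o by apply/negP => ti; move: Hxt'; rewrite idx_old // ; have := idx_lt ti; lia.
  split.
  + rewrite (negbTE tin) orbF => /eqP; lia.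
  + move=> _; exact: (Hnew w y t wo Hy0 Hyx Hxt Htw yo tin).
Qed.

Lemma sorted_split a x b : sorted ltn (a ++ x :: b) ->
  (forall u, u \in a -> u < x) /\ (forall u, u \in b -> x < u).
Proof.
rewrite sorted_pairwise; last exact: ltn_trans.
rewrite pairwise_cat /= => /and3P [H1 _ /andP [H2 _]]; split.
- by move=> u ua; apply: (allrelP H1 u x ua (mem_head x b)).
- by move=> u ub; apply: (allP H2 u ub).
Qed.

Definition NInv (s : jq_state) : Prop :=
  let: JQ i q L o := s in
  sorted ltn q /\ uniq (o ++ q) /\ (forall v, (v \in o ++ q) = (0 < v <= i)) /\ Jinv o L.

Lemma memq (o q : seq nat) i v : (forall v, (v \in o ++ q) = (0 < v <= i)) ->
  v \notin o -> 0 < v -> v <= i -> v \in q.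
Proof. move=> H vo v0 vi; have := H v; rewrite mem_cat (negbTE vo) /= => ->; lia. Qed.

Lemma memi (o q : seq nat) i v : (forall v, (v \in o ++ q) = (0 < v <= i)) ->
  v \in o ++ q -> v <= i.
Proof. by move=> H; rewrite H => /andP []. Qed.

Lemma ninv_step n s s' : jq_step n s s' -> NInv s -> NInv s'.
Proof.
case=> {s s'}.
- move=> i q L o lin [S [U [M J]]]; split; [|split; [|split]] => //.
  + rewrite sorted_pairwise; last exact: ltn_trans.
    rewrite -cats1 pairwise_cat -sorted_pairwise; last exact: ltn_trans.
    rewrite S /= andbT; apply/allrelP => u v uq; rewrite inE => /eqP ->.
    have := memi M (v:=u); rewrite mem_cat uq orbT => /(_ isT); lia.
  + rewrite -cats1 catA cat_uniq U /= andbT orbF; apply/negP => /memi -/(_ _ M); lia.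
  + move=> v; rewrite -cats1 catA mem_cat M inE.
    case: (v =P i.+1) => [->|/eqP]; rewrite ?orbT ?orbF; lia.
- move=> i x q L o [S [U [M J]]].
  have xo : x \notin o.
    by move: U; rewrite cat_uniq => /and3P [_ + _]; apply: contra => xo; apply/hasP; exists x => //; exact: mem_head.
  have xi : x <= i by apply: (memi M); rewrite mem_cat mem_head orbT.
  have bad : forall y, y \notin o -> 0 < y -> y < x -> False.
    move=> y yo y0 yx; have := memq M yo y0 (ltnW (leq_trans yx xi)).
    rewrite in_cons; case: (y =P x) => [yx'|_ /= yq]; first lia.
    have := sorted_split (a:=[::]) S => -[_ /(_ y yq)]; lia.
  split; [|split; [|split]].
  + by move: S => /= /path_sorted.
  + by rewrite cat_rcons.
  + by move=> v; rewrite cat_rcons.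
  + apply: (J_out (L:=L) J) => //.
    * move=> w y t h1 y0 yx h2 h3 yo h4; case: (bad y yo y0 yx).
    * by move=> y yo y0 yx; case: (bad y yo y0 yx).
- move=> i a x b L o o0 nl [S [U [M J]]].
  have P : perm_eq (rcons o x ++ (a ++ b)) (o ++ (a ++ x :: b)).
    rewrite cat_rcons perm_cat2l -(cat1s x b) -(cat1s x (a ++ b)).
    by rewrite perm_catCA.
  have xo : x \notin o.
    move: U; rewrite cat_uniq => /and3P [_ + _]; apply: contra => xo.
    by apply/hasP; exists x => //; rewrite mem_cat mem_head orbT.
  have xi : x <= i by apply: (memi M); rewrite !mem_cat mem_head !orbT.
  have [Sa Sb] := sorted_split S.
  split; [|split; [|split]].
  + apply: subseq_sorted S; first exact: ltn_trans.
    by apply: cat_subseq => //; apply: subseq_cons.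
  + by rewrite (perm_uniq P).
  + by move=> v; rewrite (perm_mem P).
  + apply: (J_out (L:=L) J) => //.
    * move=> w y t wo y0 yx xt tw yo tO /=.
      have wi : w <= i by apply: (memi M); rewrite mem_cat wo.
      have yq := memq M yo y0 (ltnW (leq_trans yx xi)).
      have tq := memq M tO (leq_ltn_trans (leq0n y) (ltn_trans yx xt)) (ltnW (leq_trans tw wi)).
      have ya : y \in a.
        move: yq; rewrite mem_cat in_cons; case/or3P => [//|/eqP e|yb].
        - by rewrite e ltnn in yx.
        - by have := ltn_trans yx (Sb _ yb); rewrite ltnn.
      have tb : t \in b.
        move: tq; rewrite mem_cat in_cons; case/or3P => [ta|/eqP e|//].
        - by have := ltn_trans (Sa _ ta) xt; rewrite ltnn.
        - by rewrite e ltnn in xt.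
      by rewrite ya tb.
    * by move=> P0 H /=; rewrite H orbT.
    * move=> y yo y0 yx /hasP [l lL /andP [yl xl]].
      move/negP: nl; apply; apply/hasP; exists l => //; rewrite xl andbT.
      apply/hasP; exists y => //; apply: (memq M yo y0); lia.
Qed.

Lemma ninv_reach n s s' : jq_reach n s s' -> NInv s -> NInv s'.
Proof. elim=> [//|a b c H _ IH] Ia; apply: IH; exact: ninv_step H Ia. Qed.

Lemma subseq_idx (a b : nat) s p : subseq (a :: s) p -> b \in s -> uniq p -> index a p < index b p.
Proof.
elim: p => [//|c p IH] /=.
case: (a =P c) => [<-|/eqP ac] Ss bs /andP [ap Up].
- have bp : b \in p by apply: (mem_subseq Ss).
  case: (a =P b) => [ab|/eqP ab]; first by subst; rewrite bp in ap.
  by rewrite eqxx.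
- rewrite eq_sym (negbTE ac).
  have bp : b \in p by apply: (mem_subseq Ss); rewrite in_cons bs orbT.
  have cb : c != b by apply/eqP => cb; subst; rewrite bp in ap.
  by rewrite (negbTE cb) ltnS; apply: IH.
Qed.

Lemma iso4231 s : order_iso s [:: 4;2;3;1] ->
  exists w x t y, s = [:: w;x;t;y] /\ y < x /\ x < t /\ t < w.
Proof.
rewrite /order_iso => /andP [/eqP sz /forallP H].
case: s sz H => [|w [|x [|t [|y [|]]]]] // _ H.
exists w, x, t, y; split => //.
have h1 := forallP (H (@Ordinal 4 3 isT)) (@Ordinal 4 1 isT).
have h2 := forallP (H (@Ordinal 4 1 isT)) (@Ordinal 4 2 isT).
have h3 := forallP (H (@Ordinal 4 2 isT)) (@Ordinal 4 0 isT).
by move: h1 h2 h3 => /= /eqP -> /eqP -> /eqP ->.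
Qed.

Lemma necessity n pi : jq_producible n pi -> avoids pi [:: 4;2;3;1].
Proof.
move=> [L R] [s [Ss Hiso]].
have I0 : NInv (JQ 0 [::] [::] [::]).
  split; [|split; [|split]] => //; first by move=> v; rewrite in_nil; lia.
have [_ [U [M J]]] := ninv_reach R I0.
rewrite cats0 in U M.
have [w [x [t [y [Es [yx [xt tw]]]]]]] := iso4231 Hiso; subst s.
have S2 : subseq [:: x; t; y] pi by apply: subseq_trans Ss; apply: subseq_cons.
have S3 : subseq [:: t; y] pi by apply: subseq_trans S2; apply: subseq_cons.
have wp : w \in pi by apply: (mem_subseq Ss); rewrite mem_head.
have xp : x \in pi by apply: (mem_subseq S2); rewrite mem_head.
have tp : t \in pi by apply: (mem_subseq S3); rewrite mem_head.
have yp : y \in pi by apply: (mem_subseq S3); rewrite !inE eqxx orbT.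
have y0 : 0 < y by move: yp; rewrite M => /andP [].
have i1 : index w pi < index x pi by apply: (subseq_idx Ss) => //; rewrite mem_head.
have i2 : index x pi < index t pi by apply: (subseq_idx S2) => //; rewrite !inE eqxx.
have i3 : index t pi < index y pi by apply: (subseq_idx S3) => //; rewrite !inE eqxx.
have [A _] := J w x y t wp xp i1 y0 yx xt tw (ltn_trans i2 i3) i2.
have := A tp; rewrite ltnNge (ltnW i3) //.
Qed.

Definition mx (p : seq nat) := foldr maxn 0 p.

Lemma mx_rcons p z : mx (rcons p z) = maxn (mx p) z.
Proof. elim: p => [|a p IH] /=; first by rewrite /mx /= maxnC. by rewrite /mx /= -/(mx _) IH maxnA. Qed.

Lemma mx_ge p v : v \in p -> v <= mx p.
Proof.
elim: p => [//|a p IH]; rewrite in_cons /mx /= -/(mx _) => /orP [/eqP ->|vp]; first exact: leq_maxl.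
by apply: leq_trans (IH vp) (leq_maxr _ _).
Qed.

Lemma mx_mem p : 0 < mx p -> mx p \in p.
Proof.
elim: p => [//|a p IH] H.
have E : mx (a :: p) = maxn a (mx p) by [].
rewrite E in H *; case: (leqP a (mx p)) => h.
- rewrite in_cons IH ?orbT //; lia.
- by rewrite mem_head.
Qed.

Lemma mx_le p m : (forall v, v \in p -> v <= m) -> mx p <= m.
Proof.
elim: p => [//|a p IH] H; rewrite /mx /= -/(mx _) geq_max H ?mem_head //=.
by apply: IH => v vp; apply: H; rewrite in_cons vp orbT.
Qed.

Definition Kinv (p : seq nat) (L : seq (seq nat * seq nat)) : Prop :=
 forall l, l \in L -> forall y v, y \in l.1 -> v \in l.2 -> y \notin p -> v \notin p ->
   exists w x, subseq [:: w; x] p /\ y < x /\ x < v /\ v < w.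

Lemma K_mono p z L : Kinv p L -> Kinv (rcons p z) L.
Proof.
move=> K l lL y v yl vl yp vp.
have yp' : y \notin p by apply: contra yp; rewrite mem_rcons in_cons => ->; rewrite orbT.
have vp' : v \notin p by apply: contra vp; rewrite mem_rcons in_cons => ->; rewrite orbT.
have [w [x [S H]]] := K l lL y v yl vl yp' vp'.
by exists w, x; split => //; apply: subseq_trans S (subseq_rcons _ _).
Qed.

Definition SInv p i q L : Prop :=
  i = mx p /\ sorted ltn q /\ (forall v, (v \in q) = (0 < v <= i) && (v \notin p)) /\ Kinv p L.

Lemma push_many n L o k : forall i q, i + k <= n ->
  jq_reach n (JQ i q L o) (JQ (i + k) (q ++ iota i.+1 k) L o).
Proof.
elim: k => [|k IH] i q H; first by rewrite addn0 cats0; apply: jq_refl.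
apply: (@jq_trans n _ (JQ i.+1 (rcons q i.+1) L o)); first by apply: jq_push; lia.
have := IH i.+1 (rcons q i.+1); rewrite cat_rcons addSnnS; apply; lia.
Qed.

Lemma iso_of w x t y : y < x -> x < t -> t < w -> order_iso [:: w; x; t; y] [:: 4;2;3;1].
Proof.
move=> h1 h2 h3; rewrite /order_iso /=; apply/forallP => r; apply/forallP => s.
case: r => [[|[|[|[|r]]]] Hr] //; case: s => [[|[|[|[|s]]]] Hs] //= ; apply/eqP; lia.
Qed.

Lemma sorted_cat_ltn (a b : seq nat) : sorted ltn a -> sorted ltn b ->
  (forall u v, u \in a -> v \in b -> u < v) -> sorted ltn (a ++ b).
Proof.
move=> Sa Sb H; rewrite sorted_pairwise; last exact: ltn_trans.
rewrite pairwise_cat; apply/and3P; split.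
- by apply/allrelP => u v; apply: H.
- by rewrite -sorted_pairwise //; exact: ltn_trans.
- by rewrite -sorted_pairwise //; exact: ltn_trans.
Qed.

Lemma suf_step n pi p z rest i q L :
  pi = p ++ z :: rest -> uniq pi -> (forall v, (v \in pi) = (0 < v <= n)) ->
  avoids pi [:: 4;2;3;1] -> SInv p i q L ->
  exists i' q' L', jq_reach n (JQ i q L p) (JQ i' q' L' (rcons p z)) /\ SInv (rcons p z) i' q' L'.
Proof.
move=> Epi U Mpi Av [Ei [Sq [Mq K]]].
have zp : z \notin p by move: U; rewrite Epi cat_uniq => /and3P [_ + _]; apply: contra => zp; apply/hasP; exists z => //; rewrite mem_head.
have zpi : z \in pi by rewrite Epi mem_cat mem_head orbT.
have zn : 0 < z <= n by rewrite -Mpi.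
have pn : forall v, v \in p -> v <= n.
  move=> v vp; have : v \in pi by rewrite Epi mem_cat vp.
  by rewrite Mpi => /andP [_ ->].
have hi : i <= n by rewrite Ei; apply: mx_le.
have [q1 [R1 [S1 M1]]] : exists q1, jq_reach n (JQ i q L p) (JQ (maxn i z) q1 L p) /\
    sorted ltn q1 /\ (forall v, (v \in q1) = (0 < v <= maxn i z) && (v \notin p)).
  case: (leqP z i) => zi.
  - exists q; split; [exact: jq_refl | split] => //.
  - exists (q ++ iota i.+1 (z - i)).
    have E : i + (z - i) = z by lia.
    split; first by have := @push_many n L p (z - i) i q; rewrite E; apply; lia.
    split.
    + apply: sorted_cat_ltn => //; first exact: iota_ltn_sorted.
      move=> u v; rewrite Mq mem_iota => /andP [/andP [_ ui] _] /andP [iv _]; lia.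
    + move=> v; rewrite mem_cat Mq mem_iota.
      case vp: (v \in p) => /=; last lia.
      have := mx_ge vp; rewrite -Ei => vi; rewrite !andbF /=; lia.
have zq1 : z \in q1 by rewrite M1 zp andbT; lia.
have U1 : uniq q1 := sorted_uniq ltn_trans ltnn S1.
case/splitPr: zq1 U1 S1 M1 R1 => a b U1 S1 M1 R1.
have [Sa Sb] := sorted_split S1.
have za : z \notin a by apply/negP => /Sa; rewrite ltnn.
have zb : z \notin b by apply/negP => /Sb; rewrite ltnn.
have S' : sorted ltn (a ++ b).
  apply: subseq_sorted S1; first exact: ltn_trans.
  by apply: cat_subseq => //; apply: subseq_cons.
have M' : forall v, (v \in a ++ b) = (0 < v <= maxn i z) && (v \notin rcons p z).
  move=> v; rewrite mem_rcons in_cons negb_or.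
  case: (v =P z) => [->|/eqP vz] /=.
  - by rewrite mem_cat (negbTE za) (negbTE zb) andbF.
  - by have := M1 v; rewrite !mem_cat in_cons (negbTE vz) /= => ->.
have Ei' : maxn i z = mx (rcons p z) by rewrite mx_rcons Ei.
case: a Sa za S1 M1 R1 U1 S' M' => [|a0 a] Sa za S1 M1 R1 U1 S' M'.
- exists (maxn i z), b, L; split.
  + apply: reach_trans R1 _; apply: reach1; exact: jq_pop_front.
  + by split; [|split; [|split]] => //; apply: K_mono.
- set a' := a0 :: a.
  exists (maxn i z), (a' ++ b), ((a', b) :: L).
  have NL : ~~ is_locked (a' ++ z :: b) L z.
    apply/negP => /hasP [l lL /andP [/hasP [y yl yq] zl]].
    have := M1 y; rewrite yq => /esym/andP [yi yp].
    have [w [x [Swx [yx [xz zw]]]]] := K l lL y z yl zl yp zp.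
    apply: Av; exists [:: w; x; z; y]; split; last exact: iso_of.
    rewrite Epi; change (subseq ([:: w; x] ++ [:: z; y]) (p ++ z :: rest)).
    apply: cat_subseq => //=; rewrite eqxx sub1seq.
    have : y \in pi.
      rewrite Mpi; move/andP: yi => [y0 ymax]; rewrite y0 /=; apply: leq_trans ymax _.
      by rewrite geq_max hi; case/andP: zn.
    rewrite Epi mem_cat (negbTE yp) in_cons /= => /orP [/eqP e|//].
    by rewrite e in yx; have := ltn_trans yx xz; rewrite ltnn.
  split.
  + apply: reach_trans R1 _; apply: reach1; exact: jq_jump.
  + split; [|split; [|split]] => //.
    move=> l; rewrite in_cons => /orP [/eqP -> | lL] y v /=.
    * move=> ya vb yp vp.
      have yz := Sa _ ya; have zv := Sb _ vb.
      have vp' : v \notin p by apply: contra vp; rewrite mem_rcons in_cons => ->; rewrite orbT.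
      have vq : v \in a' ++ z :: b by rewrite mem_cat in_cons vb !orbT.
      have := M1 v; rewrite vq => /esym/andP [vi _].
      have vi' : v <= mx p.
        move/andP: vi => [_]; rewrite -Ei leq_max => /orP [//|vz].
        by rewrite ltnNge vz in zv.
      have m0 : 0 < mx p by exact: (leq_ltn_trans (leq0n z) (leq_trans zv vi')).
      have mp := mx_mem m0.
      have vne : v != mx p by apply: contra vp' => /eqP ->.
      exists (mx p), z; split; last (split; [|split]) => //; last by rewrite ltn_neqAle vne vi'.
      rewrite -cats1; change (subseq ([:: mx p] ++ [:: z]) (p ++ [:: z])).
      by apply: cat_subseq; [rewrite sub1seq | exact: subseq_refl].
    * move=> yl vl yp vp; exact: (K_mono K lL yl vl yp vp).
Qed.

Lemma suf_prefix n pi : uniq pi -> (forall v, (v \in pi) = (0 < v <= n)) ->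
  avoids pi [:: 4;2;3;1] -> forall p rest, p ++ rest = pi ->
  exists i q L, jq_reach n (JQ 0 [::] [::] [::]) (JQ i q L p) /\ SInv p i q L.
Proof.
move=> U Mpi Av; elim/last_ind => [|p z IH] rest E.
- exists 0, [::], [::]; split; first exact: jq_refl.
  split; [|split; [|split]] => //; first by move=> v; rewrite in_nil; case: v.
- rewrite cat_rcons in E.
  have [i [q [L [R I]]]] := IH _ E.
  have [i' [q' [L' [R' I']]]] := suf_step (esym E) U Mpi Av I.
  exists i', q', L'; split => //; exact: reach_trans R R'.
Qed.

Lemma sufficiency n pi : perm_eq pi (iota 1 n) -> avoids pi [:: 4;2;3;1] -> jq_producible n pi.
Proof.
move=> P Av.
have U : uniq pi by rewrite (perm_uniq P) iota_uniq.
have Mpi : forall v, (v \in pi) = (0 < v <= n) by move=> v; rewrite (perm_mem P) mem_iota; lia.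
have [i [q [L [R [Ei [_ [Mq _]]]]]]] := suf_prefix U Mpi Av (cats0 pi).
have Hi : i = n.
  apply/eqP; rewrite eqn_leq; apply/andP; split.
  - by rewrite Ei; apply: mx_le => v; rewrite Mpi => /andP [].
  - case: n Mpi {P R Mq} => [//|n] Mpi; rewrite Ei; apply: mx_ge; rewrite Mpi; lia.
have Hq : q = [::].
  case: q Mq {R} => [//|v q] Mq; have := Mq v; rewrite mem_head Mpi Hi.
  by case: (0 < v <= n).
rewrite Hi Hq in R; exists L; exact: R.
Qed.

Theorem mainTheorem2 (n : nat) (pi : seq nat) :
  perm_eq pi (iota 1 n) ->
  (jq_producible n pi <-> avoids pi [:: 4; 2; 3; 1]).
Proof.
move=> P; split; first exact: necessity.
exact: sufficiency.
Qed.
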